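(* Let $G$ be a td-group acting isometrically, properly, cocompactly and smoothly on a locally compact CAT(0)-space $X$. Let $\mathcal{A}$ be a collection of closed convex subspaces of $X$ such that: (a) for all $A,A'\in\mathcal{A}$ there is $g\in G$ with $g(A)=A'$ and $g|_{A\cap A'}=\mathrm{id}_{A\cap A'}$; (b) for every $A\in\mathcal{A}$ the quotient $\Gamma_A=\{g\in G\mid gA=A\}/\{g\in G\mid g|_A=\mathrm{id}_A\}$ is discrete; (c) for any $x,y\in X$ there is $A\in\mathcal{A}$ with $x,y\in A$. Then for every $A\in\mathcal{A}$ we have $G\cdot \mathrm{FS}(A)=\mathrm{FS}(X)$.
   Context: A td-group is a topological group in which the identity admits a countable neighborhood basis of compact open subgroups. An action is smooth if all isotropy groups are open. A generalized geodesic in $X$ is a continuous map $c\colon\mathbb{R}\to X$ for which there is an open interval $U\subseteq\mathbb{R}$ (possibly unbounded, possibly all of $\mathbb{R}$) such that $c|_U$ is an isometric embedding and $c|_{\mathbb{R}\setminus U}$ is locally constant. The flow space $\mathrm{FS}(X)$ is the space of all generalized geodesics with metric $d_{\mathrm{FS}}(c,c')=\int_{\mathbb{R}} d_X(c(t),c'(t))\,2e^{-|t|}\,dt$, and $G$ acts by $(gc)(t)=g(c(t))$. For $A\subseteq X$, $\mathrm{FS}(A)\subseteq\mathrm{FS}(X)$ is the subspace of generalized geodesics with image in $A$. $\Gamma_A$ carries the quotient topology. *)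

(* Defs.v *)
From HB Require Import structures.
From mathcomp Require Import all_boot all_order all_algebra.
From mathcomp Require Import all_classical all_reals all_analysis.
Set Implicit Arguments.
Unset Strict Implicit.
Unset Printing Implicit Defensive.
Import Order.TTheory GRing.Theory Num.Theory.
Local Open Scope classical_set_scope.
Local Open Scope ring_scope.

Section Metric.
Context {R : realType} {X : Type} (d : X -> X -> R).

Definition is_metric : Prop :=
  (forall x y, d x y = 0 <-> x = y) /\
  (forall x y, d x y = d y x) /\
  (forall x y z, d x z <= d x y + d y z).

Definition mball (x : X) (e : R) : set X := [set y | d x y < e].

Definition mopen (U : set X) : Prop :=
  forall x, U x -> exists2 e : R, 0 < e & mball x e `<=` U.

Definition mclosed (C : set X) : Prop := mopen (~` C).

Definition mcompact (K : set X) : Prop :=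
  forall (I : Type) (U : I -> set X), (forall i, mopen (U i)) ->
    K `<=` \bigcup_i U i ->
    exists F : set I, finite_set F /\ K `<=` \bigcup_(i in F) U i.

Definition mlocally_compact : Prop :=
  forall x, exists K, mcompact K /\ exists2 e : R, 0 < e & mball x e `<=` K.

Definition geod_seg (c : R -> X) (x y : X) : Prop :=
  c 0 = x /\ c (d x y) = y /\
  forall s t, 0 <= s <= d x y -> 0 <= t <= d x y -> d (c s) (c t) = `|s - t|.

Definition geodesic_space : Prop := forall x y, exists c, geod_seg c x y.

Definition eucl (P Q : R * R) : R :=
  Num.sqrt ((P.1 - Q.1) ^+ 2 + (P.2 - Q.2) ^+ 2).
Definition interp (P Q : R * R) (t : R) : R * R :=
  (P.1 + t * (Q.1 - P.1), P.2 + t * (Q.2 - P.2)).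

(* z = c s is a point on the side [x,y] (given by c) and zb its comparison point
   on the side [P,Q] of the comparison triangle *)
Definition on_side (c : R -> X) (x y : X) (P Q : R * R) (z : X) (zb : R * R) :=
  exists s, 0 <= s <= d x y /\ z = c s /\ zb = interp P Q (s / d x y).

Definition CAT0_ineq : Prop :=
  forall (p q r : X) (c1 c2 c3 : R -> X),
    geod_seg c1 p q -> geod_seg c2 q r -> geod_seg c3 r p ->
  forall P Q Rr : R * R,
    eucl P Q = d p q -> eucl Q Rr = d q r -> eucl Rr P = d r p ->
  let tri z zb := on_side c1 p q P Q z zb \/ on_side c2 q r Q Rr z zb \/
                  on_side c3 r p Rr P z zb in
  forall z zb w wb, tri z zb -> tri w wb -> d z w <= eucl zb wb.

Definition CAT0_space : Prop := is_metric /\ geodesic_space /\ CAT0_ineq.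

Definition convex (A : set X) : Prop :=
  forall x y c, A x -> A y -> geod_seg c x y ->
    forall s, 0 <= s <= d x y -> A (c s).

Definition mcontinuous (c : R -> X) : Prop :=
  forall t e, 0 < e -> exists2 del : R, 0 < del &
    forall s, `|s - t| < del -> d (c t) (c s) < e.

(* generalized geodesic: U = ]a,b[ open interval, a,b extended reals;
   a = b allowed (U empty: constant maps) *)
Definition gen_geod (c : R -> X) : Prop :=
  mcontinuous c /\
  exists a b : \bar R, (a <= b)%E /\
    let U := [set t : R | (a < t%:E)%E /\ (t%:E < b)%E] in
    (forall s t, U s -> U t -> d (c s) (c t) = `|s - t|) /\
    (forall t, ~ U t -> exists2 e : R, 0 < e &
        forall s, `|s - t| < e -> ~ U s -> c s = c t).

Definition FS (A : set X) : set (R -> X) :=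
  [set c | gen_geod c /\ forall t, A (c t)].

End Metric.

Record group_law {G : Type} (mul : G -> G -> G) (inv : G -> G) (one : G) : Prop :=
  { gmulA : forall a b c, mul a (mul b c) = mul (mul a b) c;
    gmul1 : forall a, mul one a = a;
    gmulV : forall a, mul (inv a) a = one }.

Section Groups.
Context {G : topologicalType} (mul : G -> G -> G) (inv : G -> G) (one : G).

Definition topological_group : Prop :=
  group_law mul inv one /\
  continuous (fun p : G * G => mul p.1 p.2) /\ continuous inv.

Definition is_subgroup (H : set G) : Prop :=
  H one /\ (forall g h, H g -> H h -> H (mul g h)) /\ (forall g, H g -> H (inv g)).

Definition td_group : Prop :=
  topological_group /\
  exists K : nat -> set G,
    (forall n, compact (K n) /\ open (K n) /\ is_subgroup (K n)) /\
    (forall U, nbhs one U -> exists n, K n `<=` U).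
End Groups.

Section Actions.
Context {R : realType} {G : topologicalType} (mul : G -> G -> G) (one : G)
  {X : Type} (d : X -> X -> R) (act : G -> X -> X).

Definition group_action : Prop :=
  (forall x, act one x = x) /\ (forall g h x, act (mul g h) x = act g (act h x)).

Definition isometric_action : Prop := forall g x y, d (act g x) (act g y) = d x y.

Definition proper_action : Prop :=
  forall K, mcompact d K -> compact [set g | exists2 k, K k & K (act g k)].

Definition cocompact_action : Prop :=
  exists K, mcompact d K /\ forall x, exists g k, K k /\ act g k = x.

Definition smooth_action : Prop := forall x, open [set g | act g x = x].

Definition Stab (A : set X) : set G := [set g | act g @` A = A].
Definition Fix (A : set X) : set G := [set g | forall x, A x -> act g x = x].

(* Gamma_A = Stab A / Fix A with the quotient topology (Stab A carrying the
   subspace topology) is discrete: every subset of Gamma_A is open, i.e. every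
   Fix A-saturated subset of Stab A is open in the subspace Stab A. *)
Definition Gamma_discrete (A : set X) : Prop :=
  forall S : set G, S `<=` Stab A ->
    (forall g h, S g -> Fix A h -> S (mul g h)) ->
    exists2 V : set G, open V & V `&` Stab A = S.

Definition G_FS (A : set X) : set (R -> X) :=
  [set c | exists g c', FS d A c' /\ c = (fun t => act g (c' t))].
End Actions.

(* Main.v *)
Require Import Defs.
From HB Require Import structures.
From mathcomp Require Import all_boot all_order all_algebra.
From mathcomp Require Import all_classical all_reals all_analysis.
From mathcomp Require Import ring lra.
Import Order.TTheory GRing.Theory Num.Theory.
Local Open Scope classical_set_scope.
Import numFieldNormedType.Exports.
Local Open Scope ring_scope.

Lemma open_balls (R : realType) (P : R -> R -> Prop) :
  open [set z : R | exists s e, 0 < e /\ `|z - s| < e /\ P s e].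
Proof.
rewrite openE => z [s [e [e0 [zs Pse]]]].
rewrite /interior; apply/nbhs_ballP; exists (e - `|z - s|); first by rewrite /= subr_gt0.
move=> w; rewrite -ball_normE /ball_ /= => hw.
exists s, e; split => //; split => //.
have := ler_distD z w s. rewrite distrC in hw. lra.
Qed.
Lemma const_on (R : realType) (X : Type) (c : R -> X) (U : set R) (x y : R) :
  x <= y -> 
  (forall t, ~ U t -> exists2 e : R, 0 < e &
        forall s, `|s - t| < e -> ~ U s -> c s = c t) ->
  (forall r, x <= r <= y -> ~ U r) ->
  c x = c y.
Proof.
move=> xy lc IU.
pose I := [set r : R | x <= r <= y].
have cI : connected I.
  apply/connected_intervalP => a b /= /andP[? ?] /andP[? ?] z /andP[az zb].
  by apply/andP; lra.
pose B := [set r | I r /\ c r = c x].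
have BI : B = I.
  apply: cI.
  - by exists x; split => //; rewrite /I /= lexx xy.
  - exists [set z : R | exists s e, 0 < e /\ `|z - s| < e /\
        (c s = c x /\ forall w, `|w - s| < e -> ~ U w -> c w = c s)].
      exact: open_balls.
    apply/seteqP; split => r /=.
      move=> [Ir crx]; split => //.
      have [e e0 He] := lc r (IU r Ir).
      by exists r, e; rewrite subrr normr0.
    move=> [Ir [s [e [e0 [rs [csx Hs]]]]]]; split => //.
    by rewrite Hs //; apply: IU.
  - exists (~` [set z : R | exists s e, 0 < e /\ `|z - s| < e /\
        (c s <> c x /\ forall w, `|w - s| < e -> ~ U w -> c w = c s)]).
      by apply: open_closedC; exact: open_balls.
    apply/seteqP; split => r /=.
      move=> [Ir crx]; split => //.
      move=> [s [e [e0 [rs [csx Hs]]]]]; apply: csx.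
      by rewrite -(Hs r rs (IU r Ir)).
    move=> [Ir nD]; split => //.
    case: (pselect (c r = c x)) => // crx; exfalso; apply: nD.
    have [e e0 He] := lc r (IU r Ir).
    by exists r, e; rewrite subrr normr0.
have : B y by rewrite BI /I /= xy lexx.
by move=> [_ ->].
Qed.
Definition kap {R : realType} (fa fb : bool) (A B t : R) : R :=
  let t1 := if fa then (if A < t then t else A) else t in
  if fb then (if t1 < B then t1 else B) else t1.

Lemma kap_mono (R : realType) (fa fb : bool) (A B s t : R) :
  s <= t -> kap fa fb A B s <= kap fa fb A B t.
Proof.
move=> st; rewrite /kap.
case: fa; case: fb => /=;
  try (case: (ltP A s) => ?; case: (ltP A t) => ? /=);
  repeat (case: ltP => /= ?); lra.
Qed.

Lemma kap_CU {R : realType} (fa fb : bool) (A B t : R) : (fa -> fb -> A < B) ->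
  (fa -> A <= kap fa fb A B t) /\ (fb -> kap fa fb A B t <= B).
Proof.
move=> AB; rewrite /kap; split => [ha|hb].
- rewrite ha /=; case: fb AB => AB.
  + have := AB ha erefl; case: (ltP A t) => ? ? ; case: ltP => ?; lra.
  + case: (ltP A t) => ?; lra.
- rewrite hb /=; case: fa AB => AB.
  + have := AB erefl hb; case: (ltP A t) => ? ? ; case: ltP => ?; lra.
  + case: ltP => ?; lra.
Qed.

Lemma kap_id {R : realType} (fa fb : bool) (A B t : R) :
  (fa -> A <= t) -> (fb -> t <= B) -> kap fa fb A B t = t.
Proof.
rewrite /kap => h1 h2.
have -> : (if fa then (if A < t then t else A) else t) = t.
  case: fa h1 => // h1; have := h1 erefl; case: ltP => ? ?; lra.
case: fb h2 => // h2; have := h2 erefl; case: ltP => ? ?; lra.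
Qed.

Lemma kap_c {R : realType} {X : Type} (c : R -> X) (U : set R) (fa fb : bool) (A B : R) :
  (fa -> fb -> A < B) ->
  (forall t, U t <-> (fa -> A < t) /\ (fb -> t < B)) ->
  (forall t, ~ U t -> exists2 e : R, 0 < e &
        forall s, `|s - t| < e -> ~ U s -> c s = c t) ->
  forall t, c t = c (kap fa fb A B t).
Proof.
move=> AB hU lc t.
case: (boolP (fa && (t < A))) => [/andP[ha tA]|h1].
  have -> : kap fa fb A B t = A.
    rewrite /kap ha /= (ltNge A t) (ltW tA) /=.
    by case: (fb) AB => // AB; rewrite AB.
  apply: (@const_on _ _ c U) => //; first exact: ltW.
  move=> r /andP[_ rA] /hU [h _]; have := h ha; lra.
case: (boolP (fb && (B < t))) => [/andP[hb Bt]|h2].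
  have -> : kap fa fb A B t = B.
    rewrite /kap hb /=.
    have -> : (if fa then (if A < t then t else A) else t) = t.
      case: (fa) AB h1 => // AB _; have := AB erefl hb => ?.
      by case: ltP => //; lra.
    by rewrite (ltNge t B) (ltW Bt).
  symmetry; apply: (@const_on _ _ c U) => //; first exact: ltW.
  move=> r /andP[Br _] /hU [_ h]; have := h hb; lra.
rewrite kap_id //.
- move=> ha; move: h1; rewrite ha /= -leNgt //.
- move=> hb; move: h2; rewrite hb /= -leNgt //.
Qed.

Lemma approx {R : realType} (U : set R) (fa fb : bool) (A B : R) :
  (fa -> fb -> A < B) ->
  (forall t, U t <-> (fa -> A < t) /\ (fb -> t < B)) ->
  forall x, (fa -> A <= x) -> (fb -> x <= B) ->
  forall e, 0 < e -> exists u, U u /\ `|u - x| < e.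
Proof.
move=> AB hU x hxa hxb e e0.
pose u0 := if fa then (if fb then (A + B) / 2 else A + 1)
           else (if fb then B - 1 else 0).
have hu0a : fa -> A < u0.
  move=> ha; rewrite /u0 ha; case: (fb) AB => AB; last lra.
  by have := AB ha erefl; lra.
have hu0b : fb -> u0 < B.
  move=> hb; rewrite /u0 hb; case: (fa) AB => AB; last lra.
  by have := AB erefl hb; lra.
pose th := Num.min 1 (e / (`|u0 - x| + 1)).
have n0 : 0 <= `|u0 - x| by [].
have hd : 0 < `|u0 - x| + 1 by lra.
have th0 : 0 < th by rewrite /th lt_min ltr01 /= divr_gt0.
have th1 : th <= 1 by rewrite /th ge_min lexx.
have the : th * (`|u0 - x| + 1) <= e.
  rewrite -ler_pdivlMr //; rewrite /th ge_min lexx orbT //.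
exists (x + th * (u0 - x)); split.
  apply/hU; split.
  - move=> ha; have := hxa ha; have := hu0a ha => h1 h2.
    have -> : x + th * (u0 - x) = A + ((1 - th) * (x - A) + th * (u0 - A)) by ring.
    have : 0 <= (1 - th) * (x - A) by apply: mulr_ge0; lra.
    have : 0 < th * (u0 - A) by apply: mulr_gt0; lra.
    lra.
  - move=> hb; have := hxb hb; have := hu0b hb => h1 h2.
    have -> : x + th * (u0 - x) = B - ((1 - th) * (B - x) + th * (B - u0)) by ring.
    have : 0 <= (1 - th) * (B - x) by apply: mulr_ge0; lra.
    have : 0 < th * (B - u0) by apply: mulr_gt0; lra.
    lra.
have -> : x + th * (u0 - x) - x = th * (u0 - x) by ring.
rewrite normrM (gtr0_norm th0).
have : th * `|u0 - x| < th * (`|u0 - x| + 1) by rewrite ltr_pM2l //; lra.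
lra.
Qed.

Lemma iso_cl {R : realType} {X : Type} (d : X -> X -> R) (c : R -> X) (U : set R)
  (fa fb : bool) (A B : R) :
  is_metric d -> mcontinuous d c ->
  (fa -> fb -> A < B) ->
  (forall t, U t <-> (fa -> A < t) /\ (fb -> t < B)) ->
  (forall s t, U s -> U t -> d (c s) (c t) = `|s - t|) ->
  forall x y, (fa -> A <= x) -> (fb -> x <= B) -> (fa -> A <= y) -> (fb -> y <= B) ->
  d (c x) (c y) = `|x - y|.
Proof.
move=> [d0 [dsym dtri]] cont AB hU iso x y hxa hxb hya hyb.
have key : forall e : R, 0 < e ->
    d (c x) (c y) <= `|x - y| + 4 * e /\ `|x - y| <= d (c x) (c y) + 4 * e.
  move=> e e0.
  have [dx dx0 Hx] := cont x e e0.
  have [dy dy0 Hy] := cont y e e0.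
  have m0 : 0 < Num.min dx e by rewrite lt_min dx0 e0.
  have m0' : 0 < Num.min dy e by rewrite lt_min dy0 e0.
  have [u [Uu ux]] := @approx _ U fa fb A B AB hU x hxa hxb _ m0.
  have [v [Uv vy]] := @approx _ U fa fb A B AB hU y hya hyb _ m0'.
  move: ux vy; rewrite !lt_min => /andP[ux1 ux2] /andP[vy1 vy2].
  have h1 := Hx u ux1.
  have h2 := Hy v vy1.
  have h3 := iso u v Uu Uv.
  have t1 := dtri (c x) (c u) (c y).
  have t2 := dtri (c u) (c v) (c y).
  have t3 := dtri (c u) (c x) (c v).
  have t4 := dtri (c x) (c y) (c v).
  have s1 := dsym (c v) (c y).
  have s2 := dsym (c u) (c x).
  have n1 := ler_distD y u v.
  have n2 := ler_distD x u y.
  have n3 := ler_distD u x y.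
  have n4 := ler_distD v u y.
  have s3 := distrC u x.
  have s4 := distrC v y.
  split; lra.
apply/eqP; rewrite eq_le; apply/andP; split; apply/ler_addgt0Pr => e e0;
  have := key (e / 4) ltac:(by rewrite divr_gt0); lra.
Qed.

Lemma seg_core {R : realType} {X : Type} (d : X -> X -> R) (c : R -> X) (U : set R)
  (fa fb : bool) (A B : R) :
  is_metric d -> mcontinuous d c ->
  (fa -> fb -> A < B) ->
  (forall t, U t <-> (fa -> A < t) /\ (fb -> t < B)) ->
  (forall s t, U s -> U t -> d (c s) (c t) = `|s - t|) ->
  (forall t, ~ U t -> exists2 e : R, 0 < e &
        forall s, `|s - t| < e -> ~ U s -> c s = c t) ->
  forall N : R, 0 <= N -> exists p q : R,
   geod_seg d (fun r => c (p + r)) (c p) (c q) /\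
   forall t, `|t| <= N -> exists r, 0 <= r <= d (c p) (c q) /\ c t = c (p + r).
Proof.
move=> met cont AB hU iso lc N N0.
have [hpa hpb] := @kap_CU _ fa fb A B (- N) AB.
have [hqa hqb] := @kap_CU _ fa fb A B N AB.
set p := kap fa fb A B (- N) in hpa hpb *.
set q := kap fa fb A B N in hqa hqb *.
have pq : p <= q by apply: kap_mono; lra.
have CUr : forall r, p <= r <= q -> (fa -> A <= r) /\ (fb -> r <= B).
  move=> r /andP[pr rq]; split => h; [have := hpa h | have := hqb h]; lra.
have isoc := @iso_cl _ _ d c U fa fb A B met cont AB hU iso.
have hpq : d (c p) (c q) = q - p.
  rewrite (isoc p q hpa hpb hqa hqb) distrC ger0_norm //; lra.
exists p, q; split.
  split; first by rewrite addr0.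
  split; first by rewrite hpq; congr (c _); ring.
  rewrite hpq => s t /andP[s0 s1] /andP[t0 t1].
  have [h1 h2] := CUr (p + s) ltac:(apply/andP; lra).
  have [h3 h4] := CUr (p + t) ltac:(apply/andP; lra).
  rewrite (isoc _ _ h1 h2 h3 h4); congr (`| _ |); ring.
move=> t tN.
have tN' : - N <= t <= N by rewrite -ler_norml.
move: tN' => /andP[t1 t2].
exists (kap fa fb A B t - p); split.
  rewrite hpq; apply/andP; split.
    have := @kap_mono _ fa fb A B _ _ t1; rewrite -/p; lra.
  have := @kap_mono _ fa fb A B _ _ t2; rewrite -/q; lra.
rewrite (@kap_c _ _ c U fa fb A B AB hU lc t); congr (c _); ring.
Qed.

Lemma ext_itv {R : realType} (a b : \bar R) : (a < b)%E ->
  exists (fa fb : bool) (A B : R), (fa -> fb -> A < B) /\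
    forall t : R, ((a < t%:E)%E /\ (t%:E < b)%E) <-> ((fa -> A < t) /\ (fb -> t < B)).
Proof.
case: a => [a0| |]; case: b => [b0| |] //= ab.
- exists true, true, a0, b0; split; first by move=> _ _; rewrite -lte_fin.
  by move=> t; rewrite !lte_fin; split => [[-> ->]|[h1 h2]]; [|split; [apply: h1|apply: h2]].
- exists true, false, a0, 0; split => // t; rewrite lte_fin ltry.
  by split => [[-> _]|[h _]]; [|split => //; apply: h].
- exists false, true, 0, b0; split => // t; rewrite lte_fin ltNyr.
  by split => [[_ ->]|[_ h]]; [|split => //; apply: h].
- exists false, false, 0, 0; split => // t; rewrite ltry ltNyr.
  by split.
Qed.

Lemma gg_seg {R : realType} {X : Type} (d : X -> X -> R) (c : R -> X) :
  is_metric d -> gen_geod d c ->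
  forall N : R, 0 <= N -> exists p q : R,
   geod_seg d (fun r => c (p + r)) (c p) (c q) /\
   forall t, `|t| <= N -> exists r, 0 <= r <= d (c p) (c q) /\ c t = c (p + r).
Proof.
move=> met [cont [a [b [ab /= [iso lc]]]]] N N0.
have [eab|nab] := eqVneq a b.
  subst b.
  have Ue : forall t : R, ~ ((a < t%:E)%E /\ (t%:E < a)%E).
    by move=> t [h1 h2]; have := lt_trans h1 h2; rewrite ltxx.
  have cc : forall t, c t = c 0.
    move=> t; case: (leP t 0) => ht.
      by apply: (@const_on _ _ c _ t 0 ht lc) => // r _; apply: Ue.
    by symmetry; apply: (@const_on _ _ c _ 0 t (ltW ht) lc) => // r _; apply: Ue.
  have d00 : d (c 0) (c 0) = 0 by apply/(proj1 met).
  exists 0, 0; split.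
    split; first by rewrite addr0.
    split; first by rewrite d00 addr0.
    rewrite d00 => s t /andP[s0 s1] /andP[t0 t1].
    have -> : s = 0 by apply/eqP; rewrite eq_le s1 s0.
    have -> : t = 0 by apply/eqP; rewrite eq_le t1 t0.
    by rewrite addr0 d00 subrr normr0.
  move=> t _; exists 0; split; first by rewrite d00 lexx.
  by rewrite addr0 cc.
have ab' : (a < b)%E by rewrite lt_neqAle nab ab.
have [fa [fb [A [B [AB hU]]]]] := @ext_itv _ a b ab'.
exact: (@seg_core _ _ d c _ fa fb A B met cont AB hU iso lc).
Qed.

Lemma cont_mull (G : topologicalType) (mul : G -> G -> G) a :
  continuous (fun p : G * G => mul p.1 p.2) -> continuous (fun g => mul a g).
Proof.
move=> hc g.
apply: (@continuous_comp _ _ _ (fun g : G => (a, g)) (fun p : G * G => mul p.1 p.2) g);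
  last exact: hc.
apply: cvg_pair; [exact: cvg_cst | exact: cvg_id].
Qed.

Lemma ev_ge (G : topologicalType) (k : nat -> G) (N : nat) :
  (k @ \oo) [set g | exists2 n, (N <= n)%N & g = k n].
Proof. by exists N => // n /= hn; exists n. Qed.

Lemma mulgV' {G : Type} (mul : G -> G -> G) (inv : G -> G) (one : G) :
  group_law mul inv one -> forall a, mul a (inv a) = one.
Proof.
case=> gA g1 gV a.
rewrite -[mul a (inv a)]g1 -[in mul one _](gV (inv a)) -gA [mul (inv a) (mul a (inv a))]gA.
by rewrite gV g1 gV.
Qed.

Lemma gg_act {R : realType} {X : Type} (d : X -> X -> R) (f : X -> X) (c : R -> X) :
  (forall x y, d (f x) (f y) = d x y) -> gen_geod d c -> gen_geod d (fun t => f (c t)).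
Proof.
move=> hf [cont [a [b [ab /= [iso lc]]]]]; split.
  by move=> t e e0; have [del del0 H] := cont t e e0; exists del => // s hs; rewrite hf; apply: H.
exists a, b; split => //=; split.
  by move=> s t hs ht; rewrite hf; apply: iso.
move=> t ht; have [e e0 H] := lc t ht; exists e => // s hs hUs; by rewrite (H s hs hUs).
Qed.

Theorem lemma2p3 (R : realType) (G : topologicalType)
    (mul : G -> G -> G) (inv : G -> G) (one : G)
    (X : Type) (d : X -> X -> R) (act : G -> X -> X) (Acal : set (set X)) :
  td_group mul inv one ->
  CAT0_space d -> mlocally_compact d ->
  group_action mul one act ->
  isometric_action d act -> proper_action d act ->
  cocompact_action d act -> smooth_action act ->
  (forall A, Acal A -> mclosed d A /\ convex d A) ->
  (forall A A', Acal A -> Acal A' ->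
     exists g, act g @` A = A' /\ (forall x, A x -> A' x -> act g x = x)) ->
  (forall A, Acal A -> Gamma_discrete mul act A) ->
  (forall x y, exists A, Acal A /\ A x /\ A y) ->
  forall A, Acal A -> G_FS d act A = FS d setT.
Proof.
move=> [[gl [mulc invc]] _] [met _] _ [act1 actM] iact prop _ smooth hA ha _ hc A hAA.
have mV := @mulgV' _ mul inv one gl.
have Vm : forall a, mul (inv a) a = one by case: gl.
have actK : forall g x, act (inv g) (act g x) = x.
  by move=> g x; rewrite -actM Vm act1.
have actKV : forall g x, act g (act (inv g) x) = x.
  by move=> g x; rewrite -actM mV act1.
apply/seteqP; split.
  move=> c [g [c' [[gc' _] ->]]]; split => //.
  exact: (@gg_act _ _ d (act g) c' (iact g)).
move=> c [gc _].
pose x0 := c 0.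
have [A0 [hA0 [A0x0 _]]] := hc x0 x0.
have hB : forall n : nat, exists B, Acal B /\ forall t, `|t| <= n%:R -> B (c t).
  move=> n.
  have [p [q [sg ht]]] := @gg_seg _ _ d c met gc n%:R (ler0n _ n).
  have [B [hBB [Bp Bq]]] := hc (c p) (c q).
  exists B; split => // t /ht [r [hr ->]].
  exact: (proj2 (hA B hBB) _ _ _ Bp Bq sg r hr).
have [Bf hBf] := choice hB.
have hk : forall n : nat, exists k, act k x0 = x0 /\
    forall t, `|t| <= n%:R -> A0 (act k (c t)).
  move=> n; have [hBn Bnc] := hBf n.
  have [k [kB kfix]] := ha _ _ hBn hA0.
  exists k; split.
    by apply: kfix => //; apply: Bnc; rewrite normr0.
  move=> t ht; rewrite -kB; exists (c t) => //; exact: Bnc.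
have [kf hkf] := choice hk.
pose St := [set g | exists2 k, [set x0] k & [set x0] (act g k)].
have cSt : compact St.
  apply: prop => I U _ cov.
  have [i _ Ui] := cov x0 erefl.
  exists [set i]; split; first exact: finite_set1.
  by move=> y ->; exists i.
have [kk [Skk clk]] : exists kk, St kk /\ cluster (kf @ \oo) kk.
  have := cSt (kf @ \oo) _ _.
  case.
  - by exists 0%N => // n _ /=; exists x0 => //; rewrite /= (proj1 (hkf n)).
  - by move=> kk [h1 h2]; exists kk.
have kkA0 : forall t, A0 (act kk (c t)).
  move=> t.
  pose Nt := Num.Def.archi_bound t.
  have tN : `|t| < Nt%:R := unstable.ltr_norm_bound t.
  pose O := [set g | act (mul (inv kk) g) (c t) = c t].
  have oO : open O.
    apply: (@open_comp _ _ (fun g => mul (inv kk) g) [set g | act g (c t) = c t]).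
      by move=> g _; apply: cont_mull.
    exact: smooth.
  have Okk : O kk by rewrite /O /= Vm act1.
  have nO : nbhs kk O by apply: open_nbhs_nbhs; split.
  have [g [[n hn ->] hg]] := clk _ _ (@ev_ge G kf Nt) nO.
  have -> : act kk (c t) = act (kf n) (c t).
    by move: hg; rewrite /O /= actM => hg; rewrite -{1}hg actKV.
  apply: (proj2 (hkf n)); apply: (le_trans (ltW tN)); by rewrite ler_nat.
have [h [hAh _]] := ha _ _ hAA hA0.
exists (mul (inv kk) h), (fun t => act (mul (inv h) kk) (c t)); split.
  split; first exact: (@gg_act _ _ d _ c (iact _) gc).
  move=> t; have := kkA0 t; rewrite -hAh => -[a Aa ha'].
  by rewrite actM -ha' actK.
apply: funext => t /=.
by rewrite !actM actKV actK.
Qed.
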